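(* Let $k\in\mathbb{Z}_{\geq2}$ and $j\in\mathbb{Z}_{\geq0}$. Then, as $n\to\infty$ (with implied constants depending on $k$ and $j$), \[ {}_k\omega_n(j)=\frac{e^{-1/n}}{j!\,n^j}+O\!\left(\frac{2^{r_k(n)-j}}{(r_k(n)-j)!}\right), \] and in particular \[ {}_k\omega_n(j)=\frac{1}{j!\,n^j}\left(1-\frac1n\right)+O\!\left(\frac{1}{n^{j+2}}\right). \]
   Context: For $k\in\mathbb{Z}_{\ge2}$, $n\in\mathbb{Z}_{\ge1}$, $r_k(n)=\frac1n\sum_{d\mid n}k^d\mu(n/d)$ ($\mu$ the Möbius function); $n\,r_k(n)$ is the degree of the $n$th dynatomic polynomial of $x^k+c$. $C_n\wr S_r=C_n^r\rtimes S_r$ acts on $B(n,r)=C_n\times\{1,\dots,r\}$ by $((\zeta_1,\dots,\zeta_r),\pi)\cdot(\zeta,i)=(\zeta_i\zeta,\pi(i))$; $\mathrm{Fix}(\sigma)$ is the fixed-point set of $\sigma$ in $B(n,r)$, and $\omega_{n,r}(j)=|\{\sigma\in C_n\wr S_r: |\mathrm{Fix}(\sigma)|=jn\}|/(r!\,n^r)$. Finally ${}_k\omega_n:=\omega_{n,r_k(n)}$. *)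

(* Defs.v *)
From Stdlib Require Import Reals.
From mathcomp Require Import all_boot all_order all_algebra all_fingroup.
Set Implicit Arguments. Unset Strict Implicit. Unset Printing Implicit Defensive.

Definition mu (m : nat) : int :=
  if all (fun p => logn p m <= 1) (primes m)
  then ((-1) ^+ size (primes m))%R else 0%R.

(* r_k(n) = (1/n) sum_{d | n} k^d mu(n/d)  (an integer; taken as nat) *)
Definition rsum (k n : nat) : int :=
  (\sum_(d <- divisors n) (k ^ d)%:Z * mu (n %/ d))%R.
Definition r_ (k n : nat) : nat := `|(rsum k n %/ n)%Z|%N.

(* Wreath product C_n wr S_r = C_n^r x| S_r, elements (zeta, pi);
   C_n is modelled additively as Z/nZ (values in 'I_n). *)
Definition wreath (n r : nat) : finType := ({ffun 'I_r -> 'I_n} * {perm 'I_r})%type.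

(* sigma . (z, i) = (zeta_i + z mod n, pi i); Fix(sigma) as a set of B(n,r)=C_n x {1..r} *)
Definition Fix (n r : nat) (s : wreath n r) : {set 'I_n * 'I_r} :=
  [set b : 'I_n * 'I_r |
     ((val (s.1 b.2) + val b.1) %% n == val b.1) && (s.2 b.2 == b.2)].

Definition count_fix (n r j : nat) : nat :=
  #|[set s : wreath n r | #|Fix s| == j * n]|.

Definition omega (n r j : nat) : R :=
  Rdiv (INR (count_fix n r j)) (Rmult (INR (r`!)) (pow (INR n) r)).

Definition komega (k n j : nat) : R := omega n (r_ k n) j.

(* Main.v *)
Require Import Defs.
From Stdlib Require Import Reals Factorial Lra Lia.
From mathcomp Require Import all_boot all_order all_algebra all_fingroup.
From mathcomp Require Import zify.
Set Implicit Arguments. Unset Strict Implicit. Unset Printing Implicit Defensive.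

Section StdPart.
Local Open Scope R_scope.
Definition Un (a : R) (l : nat) : R := a ^ l / INR (fact l).

Lemma Un_dec a : 0 <= a <= 1 -> Un_decreasing (Un a).
Proof.
intros [h0 h1] n. unfold Un.
rewrite fact_simpl mult_INR. simpl pow.
assert (hf : 0 < INR (fact n)) by (apply lt_0_INR; apply lt_O_fact).
assert (hn : 1 <= INR (S n)) by (apply (le_INR 1); lia).
assert (hp : 0 <= a ^ n) by (apply pow_le; lra).
unfold Rdiv. rewrite Rinv_mult.
apply Rle_trans with (a * a ^ n * / INR (fact n) * / INR (S n)).
- right; ring.
- assert (hi : 0 < / INR (S n) <= 1).
  { split. apply Rinv_0_lt_compat; lra.
    rewrite -Rinv_1. apply Rinv_le_contravar; lra. }
  assert (0 <= a ^ n * / INR (fact n)).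
  { apply Rmult_le_pos; [lra| left; apply Rinv_0_lt_compat; lra]. }
  replace (a * a ^ n * / INR (fact n) * / INR (S n)) with (a * (a ^ n * / INR (fact n)) * / INR (S n)) by ring.
  set (x := a ^ n * / INR (fact n)) in *. set (y := / INR (S n)) in *.
  assert (a * y <= 1) by nra. nra.
Qed.

Lemma alt_cv a : Un_cv (fun N => sum_f_R0 (tg_alt (Un a)) N) (exp (- a)).
Proof.
apply Un_cv_ext with (E1 (- a)).
- intro N. unfold E1. apply PartSum.sum_eq. intros i _. unfold tg_alt, Un.
  replace (- a) with (-1 * a) by ring. rewrite Rpow_mult_distr. unfold Rdiv. ring.
- apply E1_cvg.
Qed.

Lemma tail a m : 0 <= a <= 1 ->
  Rabs (exp (- a) - sum_f_R0 (tg_alt (Un a)) m) <= Un a (S m).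
Proof.
intros ha.
assert (hd := Un_dec ha).
assert (hc : Un_cv (Un a) 0) by apply cv_speed_pow_fact.
assert (hs := alt_cv a).
assert (hU : 0 <= Un a (S m)).
{ unfold Un. apply Rmult_le_pos. apply pow_le; lra.
  left; apply Rinv_0_lt_compat, lt_0_INR, lt_O_fact. }
destruct (Nat.Even_or_Odd m) as [[N hN]|[N hN]].
- destruct (alternated_series_ineq _ _ N hd hc hs) as [h1 h2].
  assert (e : (2 * N)%coq_nat = m) by lia.
  rewrite e in h1 h2. rewrite tech5 in h1. unfold tg_alt at 2 in h1.
  assert (hs1 : (-1) ^ (S m) = -1) by (rewrite -e; apply pow_1_odd).
  rewrite hs1 in h1.
  apply Rabs_le. lra.
- destruct (alternated_series_ineq _ _ (S N) hd hc hs) as [h1 h2].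
  destruct (alternated_series_ineq _ _ N hd hc hs) as [h3 h4].
  assert (e1 : (2 * S N)%coq_nat = S m) by lia.
  assert (e2 : S (2 * N)%coq_nat = m) by lia.
  rewrite e1 tech5 in h2. unfold tg_alt at 2 in h2.
  assert (hs1 : (-1) ^ (S m) = 1) by (rewrite -e1; apply pow_1_even).
  rewrite hs1 in h2. rewrite e2 in h3.
  apply Rabs_le. lra.
Qed.

Lemma D_ge1 n j0 : (0 < n)%nat -> 1 <= INR (fact j0) * INR n ^ j0.
Proof.
intros hn.
assert (1 <= INR (fact j0)) by (apply (le_INR 1); apply lt_O_fact).
assert (1 <= INR n ^ j0) by (apply pow_R1_Rle; apply (le_INR 1); lia).
nra.
Qed.

Lemma a_range n : (0 < n)%nat -> 0 <= / INR n <= 1.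
Proof.
intros hn. assert (1 <= INR n) by (apply (le_INR 1); lia).
split. left; apply Rinv_0_lt_compat; lra.
rewrite -Rinv_1. apply Rinv_le_contravar; lra.
Qed.

Lemma part1_bound n m j0 : (0 < n)%nat ->
  Rabs (/ (INR (fact j0) * INR n ^ j0) * sum_f_R0 (tg_alt (Un (/ INR n))) m
        - exp (- / INR n) / (INR (fact j0) * INR n ^ j0))
  <= 1 * (2 ^ m / INR (fact m)).
Proof.
intros hn.
assert (hD := D_ge1 j0 hn). assert (ha := a_range hn).
set D := INR (fact j0) * INR n ^ j0 in hD |- *.
set a := / INR n in ha |- *.
set Sm := sum_f_R0 (tg_alt (Un a)) m.
assert (ht := tail m ha). fold Sm in ht.
replace (/ D * Sm - exp (- a) / D) with (/ D * - (exp (- a) - Sm)) by (unfold Rdiv; ring).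
rewrite Rabs_mult Rabs_Ropp Rabs_right; last by left; apply Rinv_0_lt_compat; lra.
assert (hiD : 0 < / D <= 1).
{ split. apply Rinv_0_lt_compat; lra. rewrite -Rinv_1. apply Rinv_le_contravar; lra. }
assert (hU : Un a (S m) <= 2 ^ m / INR (fact m)).
{ unfold Un. rewrite fact_simpl mult_INR.
  assert (hf : 0 < INR (fact m)) by apply INR_fact_lt_0.
  assert (h1 : a ^ (S m) <= 1) by (rewrite -(pow1 (S m)); apply pow_incr; lra).
  assert (h0 : 0 <= a ^ (S m)) by (apply pow_le; lra).
  assert (h2 : 1 <= 2 ^ m) by (apply pow_R1_Rle; lra).
  assert (h3 : 1 <= INR (S m)) by (apply (le_INR 1); lia).
  unfold Rdiv. rewrite Rinv_mult.
  assert (hi1 : 0 < / INR (S m) <= 1).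
  { split. apply Rinv_0_lt_compat; lra. rewrite -Rinv_1. apply Rinv_le_contravar; lra. }
  assert (hi2 : 0 < / INR (fact m)) by (apply Rinv_0_lt_compat; lra).
  set u := / INR (S m) in hi1 |- *. set v := / INR (fact m) in hi2 |- *.
  assert (a ^ S m * u <= 1) by nra.
  nra. }
assert (0 <= Rabs (exp (- a) - Sm)) by apply Rabs_pos.
nra.
Qed.

Lemma part1_zero n j0 : (0 < n)%nat ->
  Rabs (0 - exp (- / INR n) / (INR (fact j0) * INR n ^ j0)) <= 1 * (2 ^ 0 / INR (fact 0)).
Proof.
intros hn.
assert (hD := D_ge1 j0 hn). assert (ha := a_range hn).
set D := INR (fact j0) * INR n ^ j0 in hD |- *.
set a := / INR n in ha |- *.
assert (he : exp (- a) <= 1).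
{ destruct (Req_dec a 0) as [ha0|hne].
  - rewrite ha0 Ropp_0 exp_0; lra.
  - left; rewrite -exp_0; apply exp_increasing; lra. }
assert (hp := exp_pos (- a)).
assert (hiD : 0 < / D <= 1).
{ split. apply Rinv_0_lt_compat; lra. rewrite -Rinv_1. apply Rinv_le_contravar; lra. }
simpl. unfold Rdiv. rewrite Rinv_1.
rewrite Rabs_left1; nra.
Qed.

Lemma sum1 a : sum_f_R0 (tg_alt (Un a)) 1 = 1 - a.
Proof. simpl. unfold tg_alt, Un. simpl. field. Qed.

Lemma part2_bound n m j0 : (0 < n)%nat -> (1 <= m)%nat ->
  Rabs (/ (INR (fact j0) * INR n ^ j0) * sum_f_R0 (tg_alt (Un (/ INR n))) m
        - / (INR (fact j0) * INR n ^ j0) * (1 - / INR n))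
  <= 1 * / INR n ^ (j0 + 2).
Proof.
intros hn hm.
assert (hD := D_ge1 j0 hn). assert (ha := a_range hn).
assert (hn1 : 1 <= INR n) by (apply (le_INR 1); lia).
assert (hnj : 1 <= INR n ^ j0) by (apply pow_R1_Rle; lra).
assert (hf : 1 <= INR (fact j0)) by (apply (le_INR 1); apply lt_O_fact).
rewrite -(sum1 (/ INR n)).
set D := INR (fact j0) * INR n ^ j0 in hD |- *.
set a := / INR n in ha |- *.
assert (ht1 := tail m ha). assert (ht2 := tail 1 ha).
assert (hdec : Un a (S m) <= Un a 2) by (apply decreasing_prop; [apply Un_dec; exact ha| lia]).
assert (hU2 : Un a 2 = a ^ 2 / 2) by (unfold Un; simpl; field).
rewrite -Rmult_minus_distr_l Rabs_mult Rabs_right; last by left; apply Rinv_0_lt_compat; lra.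
assert (hdiff : Rabs (sum_f_R0 (tg_alt (Un a)) m - sum_f_R0 (tg_alt (Un a)) 1) <= a ^ 2).
{ replace (sum_f_R0 (tg_alt (Un a)) m - sum_f_R0 (tg_alt (Un a)) 1) with
    (- (exp (- a) - sum_f_R0 (tg_alt (Un a)) m) + (exp (- a) - sum_f_R0 (tg_alt (Un a)) 1)) by ring.
  eapply Rle_trans. apply Rabs_triang. rewrite Rabs_Ropp. lra. }
assert (hinv : / INR n ^ (j0 + 2) = / INR n ^ j0 * a ^ 2).
{ rewrite pow_add Rinv_mult. unfold a. rewrite pow_inv. reflexivity. }
rewrite hinv.
assert (hiD : 0 < / D <= / INR n ^ j0).
{ split. apply Rinv_0_lt_compat; lra. apply Rinv_le_contravar; [lra|]. unfold D. nra. }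
assert (0 <= Rabs (sum_f_R0 (tg_alt (Un a)) m - sum_f_R0 (tg_alt (Un a)) 1)) by apply Rabs_pos.
assert (0 <= a ^ 2) by (apply pow_le; lra).
nra.
Qed.

End StdPart.

From mathcomp Require Import ring Rstruct.
Import GRing.Theory Num.Theory Order.TTheory.

Lemma binom_prod s t j : ('C(s,t) * 'C(t,j) = 'C(s,j) * 'C(s-j,t-j) * (j <= t))%N.
Proof.
case: (leqP j t) => hjt; last by rewrite (bin_small hjt) /= !muln0.
case: (leqP t s) => hts; last first.
  rewrite (bin_small hts) mul0n.
  case: (leqP j s) => hjs; last by rewrite bin_small.
  by rewrite (@bin_small (s-j)) ?muln0 ?mul0n //; lia.
rewrite muln1.
have hpos : (0 < j`! * (t-j)`! * (s-t)`!)%N by rewrite !muln_gt0 !fact_gt0.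
apply/eqP; rewrite -(eqn_pmul2r hpos); apply/eqP.
have e1 : ('C(s,t) * 'C(t,j) * (j`! * (t-j)`! * (s-t)`!) = s`!)%N.
  rewrite -(bin_fact hts) -(bin_fact hjt).
  by rewrite !mulnA; ring.
have e2 : ('C(s,j) * 'C(s-j,t-j) * (j`! * (t-j)`! * (s-t)`!) = s`!)%N.
  have hjs : (j <= s)%N by lia.
  have h2 : (t - j <= s - j)%N by lia.
  rewrite -(bin_fact hjs) -(bin_fact h2).
  have -> : (s - j - (t - j) = s - t)%N by lia.
  by rewrite !mulnA; ring.
by rewrite e1 e2.
Qed.

Definition Sset (n' r : nat) (s : wreath n'.+1 r) : {set 'I_r} :=
  [set i | ((s.1 i == ord0) && (s.2 i == i))].

Lemma modeq_small (n a b : nat) : (a < n)%N -> (b < n)%N ->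
  ((a + b) %% n == b) = (a == 0)%N.
Proof.
move=> ha hb.
rewrite -{2}(modn_small hb) -{2}(add0n b) eqn_modDr mod0n modn_small //.
Qed.

Lemma card_Fix n' r (s : wreath n'.+1 r) : #|Fix s| = (#|Sset s| * n'.+1)%N.
Proof.
have -> : Fix s = setX [set: 'I_n'.+1] (Sset s).
  apply/setP => -[z i]; rewrite !inE /= modeq_small //.
by rewrite cardsX cardsT card_ord mulnC.
Qed.

Lemma count_fixE n' r j :
  count_fix n'.+1 r j = #|[set s : wreath n'.+1 r | #|Sset s| == j]|.
Proof.
apply: eq_card => s; rewrite !inE card_Fix eqn_mul2r //.
Qed.

Lemma card_N n' r (A : {set 'I_r}) :
  #|[set s : wreath n'.+1 r | A \subset Sset s]| = (n'.+1 ^ (r - #|A|) * (r - #|A|)`!)%N.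
Proof.
pose P := [set f : {ffun 'I_r -> 'I_n'.+1} | [forall i in A, f i == ord0]].
pose Q := [set p : {perm 'I_r} | [forall i in A, p i == i]].
have -> : [set s : wreath n'.+1 r | A \subset Sset s] = setX P Q.
  apply/setP => -[f p]; rewrite !inE.
  apply/subsetP/andP => [H|[/forallP HP /forallP HQ] i iA].
    split; apply/forallP => i; apply/implyP => iA; have := H i iA;
      by rewrite inE => /andP[].
  rewrite inE; apply/andP; split.
    by have := HP i; rewrite iA.
  by have := HQ i; rewrite iA.
rewrite cardsX.
have hC : #|~: A| = (r - #|A|)%N by rewrite cardsCs setCK card_ord.
congr muln.
  rewrite -hC (_ : (n'.+1 ^ #|~:A|)%N = #|pffun_on (ord0 : 'I_n'.+1) (~: A) 'I_n'.+1|); last first.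
    by rewrite card_pffun_on card_ord.
  apply: eq_card => f.
  rewrite inE; apply/forallP/pffun_onP => [H|[/subsetP H _] i].
    split=> //; apply/subsetP => i; rewrite inE => hi.
    rewrite inE; apply/negP => iA; have := H i; rewrite iA /=.
    by rewrite (negbTE hi).
  apply/implyP => iA; apply/negPn/negP => hi.
  by have := H i hi; rewrite inE iA.
rewrite -hC -card_perm; apply: eq_card => p.
rewrite inE; apply/forallP/subsetP => [H i|H i].
  rewrite inE => hi; rewrite inE; apply/negP => iA.
  by have := H i; rewrite iA (negbTE hi).
apply/implyP => iA; apply/negPn/negP => hi.
by have := H i hi; rewrite inE iA.
Qed.

Section Comb.
Local Open Scope ring_scope.
Variable F : comRingType.

Lemma alt_sum (m M : nat) : (m <= M)%N ->
  \sum_(u < M.+1) (-1)^+u * ('C(m,u)%:R : F) = (m == 0%N)%:R.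
Proof.
move=> hmM.
rewrite -(big_mkord xpredT (fun u => (-1)^+u * ('C(m,u)%:R : F))).
rewrite (big_cat_nat _ (n:=m.+1)) //=.
rewrite [X in _ + X]big1_seq ?addr0; last first.
  move=> u /andP[_]; rewrite mem_index_iota => /andP[hu _].
  by rewrite bin_small // mulr0.
have h0 : (1 + -1 : F) ^+ m = (m==0%N)%:R by rewrite subrr expr0n.
rewrite big_mkord -h0 exprDn; apply: eq_bigr => i _.
by rewrite expr1n mul1r mulr_natr.
Qed.
Lemma sum_by_card (T : finType) (B : {set T}) (G : nat -> F) :
  \sum_(A : {set T} | A \subset B) G #|A| =
  \sum_(t < #|T|.+1) 'C(#|B|, t)%:R * G t.
Proof.
have H (A : {set T}) : (#|A| < #|T|.+1)%N by rewrite ltnS max_card.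
rewrite (partition_big (fun A => Ordinal (H A)) xpredT) //=.
apply: eq_bigr => t _.
rewrite (eq_bigr (fun _ => G t)); last by move=> A /andP[_ /eqP <-].
rewrite -cards_draws.
rewrite (eq_bigl (fun A => A \in [set A : {set T} | A \subset B & #|A| == t])).
  by rewrite sumr_const mulr_natl.
move=> A; rewrite inE; congr (_ && _).
Qed.


Lemma IE (T : finType) (S : {set T}) j :
  ((#|S| == j)%:R : F) =
  \sum_(A : {set T} | A \subset S) (-1)^+(#|A| - j) * 'C(#|A|, j)%:R.
Proof.
rewrite (sum_by_card S (fun a => (-1)^+(a - j) * ('C(a, j)%:R : F))).
set N := #|T|. set s := #|S|.
have hsN : (s <= N)%N by apply: max_card.
case: (leqP j N) => hjN; last first.
  rewrite big1; last by move=> t _; rewrite (@bin_small t j) ?mulr0 //; apply: leq_trans (ltn_ord t) hjN.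
  by have -> : (s == j) = false by apply/negbTE; rewrite neq_ltn (leq_ltn_trans hsN hjN).
under eq_bigr => t _ do rewrite mulrCA -natrM binom_prod.
rewrite -(big_mkord xpredT (fun t => (-1) ^+ (t - j) * ('C(s, j) * 'C(s - j, t - j) * (j <= t))%:R : F)).
rewrite (big_cat_nat _ (n:=j)) //=; last by apply: leq_trans hjN _.
rewrite big1_seq ?add0r; last first.
  move=> u /andP[_]; rewrite mem_index_iota => /andP[_ hu].
  by rewrite leqNgt hu /= muln0 mulr0.

rewrite -[X in \sum_(X <= _ < _) _]add0n big_addn.
have -> : (N.+1 - j = (N - j).+1)%N by rewrite subSn.
under eq_bigr => u _ do rewrite addnK leq_addl muln1 natrM mulrCA.
rewrite -mulr_sumr big_mkord.
case: (leqP j s) => hjs.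
  rewrite alt_sum; last by rewrite leq_sub2r.
  have [->|hne] := eqVneq s j; first by rewrite subnn binn mulr1.
  have -> : (s - j == 0)%N = false by apply/eqP; move/eqP: hne; lia.
  by rewrite mulr0.
rewrite (bin_small hjs) (_ : 0%:R = 0) // mul0r.
by have -> : (s == j) = false by apply/negbTE; rewrite neq_ltn hjs.
Qed.


Lemma count_formula n' r j : ((count_fix n'.+1 r j)%:R : F) =
  \sum_(t < r.+1) 'C(r,t)%:R * ((-1)^+(t-j) * 'C(t,j)%:R * (n'.+1 ^ (r-t) * (r-t)`!)%:R).
Proof.
rewrite count_fixE -sum1_card natr_sum big_mkcond /=.
rewrite (eq_bigr (fun s : wreath n'.+1 r => \sum_(A : {set 'I_r}) ((A \subset Sset s)%:R * ((-1)^+(#|A| - j) * 'C(#|A|, j)%:R)) : F)); last first.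
  move=> s _; rewrite inE (_ : (if _ then 1 else 0) = (#|Sset s| == j)%:R); last by case: (_ == _).
  rewrite IE big_mkcond /=; apply: eq_bigr => A _.
  by case: (A \subset Sset s); rewrite ?mul1r ?mul0r.
rewrite exchange_big /=.
rewrite (eq_bigr (fun A : {set 'I_r} => ((-1)^+(#|A| - j) * 'C(#|A|, j)%:R) * (n'.+1 ^ (r - #|A|) * (r - #|A|)`!)%:R : F)); last first.
  move=> A _; rewrite -card_N -mulr_suml mulrC; congr (_ * _).
  rewrite -sum1_card natr_sum [in RHS]big_mkcond /=; apply: eq_bigr => s _.
  by rewrite inE; case: (A \subset Sset s).
rewrite (eq_bigl (fun A : {set 'I_r} => A \subset setT)); last by move=> A; rewrite subsetT.
rewrite (sum_by_card setT (fun a => ((-1)^+(a - j) * 'C(a, j)%:R) * (n'.+1 ^ (r - a) * (r - a)`!)%:R : F)).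
by rewrite cardsT !card_ord.
Qed.

End Comb.

Section RealF.
Local Open Scope ring_scope.

Lemma term_id (n r t j : nat) : (0 < n)%N -> (t <= r)%N -> (j <= t)%N ->
  ('C(r,t)%:R * 'C(t,j)%:R * (n ^ (r-t) * (r-t)`!)%:R / ((r`!)%:R * (n%:R : R)^+r))
  = ((j`!)%:R * (n%:R)^+j)^-1 * ((n%:R^-1)^+(t-j) / ((t-j)`!)%:R).
Proof.
move=> hn htr hjt.
have e : ('C(r,t) * 'C(t,j) * (r-t)`! * (j`! * (t-j)`!) = r`!)%N.
  rewrite -(bin_fact htr) -(bin_fact hjt); ring.
have en : (n ^ (r - t) * n ^ (t - j) * n ^ j = n ^ r)%N.
  by rewrite -!expnD -addnA subnK // subnK.
have hn0 : (n%:R : R) != 0 by rewrite pnatr_eq0 -lt0n.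
have hf (m : nat) : ((m`!)%:R : R) != 0 by rewrite pnatr_eq0 -lt0n fact_gt0.
have hc : ('C(r,t) * 'C(t,j) * (r-t)`!)%:R != (0 : R).
  by rewrite pnatr_eq0 -lt0n !muln_gt0 !bin_gt0 htr hjt fact_gt0.
rewrite -[(n%:R : R)^+r]natrX -en -e.
rewrite !natrM !natrX in hc *.
move: hc (hf j) (hf (t-j)%N) hn0.
set a := 'C(r, t)%:R; set b := 'C(t, j)%:R; set c := (r - t)`!%:R; set N := n%:R.
set d := j`!%:R; set g := (t - j)`!%:R => hc hd hg hN.
rewrite exprVn.
have hNe (m : nat) : N ^+ m != 0 by rewrite expf_neq0.
field.
by rewrite !hf !hNe !pnatr_eq0 -!lt0n !bin_gt0 htr hjt.
Qed.

Lemma omegaE n' r j : omega n'.+1 r j =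
  if (j <= r)%N then ((j`!)%:R * ((n'.+1)%:R)^+j)^-1 *
     \sum_(0 <= l < (r-j).+1) (-1)^+l * (((n'.+1)%:R^-1)^+l / ((l`!)%:R))
  else 0.
Proof.
rewrite /omega !RealsE (count_formula R) mulr_suml.
set n := n'.+1.
have G t : (t < r.+1)%N ->
   'C(r,t)%:R * ((-1)^+(t-j) * 'C(t,j)%:R * (n ^ (r-t) * (r-t)`!)%:R) / ((r`!)%:R * (n%:R : R)^+r)
   = if (j <= t)%N then (-1)^+(t-j) * (((j`!)%:R * (n%:R)^+j)^-1 * ((n%:R^-1)^+(t-j) / ((t-j)`!)%:R)) else 0.
  move=> ht; case: (leqP j t) => hjt; last by rewrite (bin_small hjt) !(mulr0, mul0r).
  rewrite -(term_id (n:=n) (r:=r) (t:=t) (j:=j)) //.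
  ring.
pose H t : R := if (j <= t)%N then (-1)^+(t-j) * (((j`!)%:R * (n%:R)^+j)^-1 * ((n%:R^-1)^+(t-j) / ((t-j)`!)%:R)) else 0.
rewrite (eq_bigr (fun t : 'I_r.+1 => H t)); last by move=> t _; rewrite G.
rewrite -(big_mkord xpredT H) /H.
case: (leqP j r) => hjr; last first.
  rewrite big1_seq // => t /andP[_]; rewrite mem_index_iota => /andP[_ ht].
  by have -> : (j <= t)%N = false by apply/negbTE; rewrite -ltnNge; apply: leq_trans hjr.
rewrite (big_cat_nat _ (n:=j)) //=; last by apply: leq_trans hjr _.
rewrite big1_seq ?add0r; last first.
  move=> u /andP[_]; rewrite mem_index_iota => /andP[_ hu].
  by rewrite leqNgt hu.
rewrite -[X in \sum_(X <= _ < _) _]add0n big_addn.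
have -> : (r.+1 - j = (r - j).+1)%N by rewrite subSn.
rewrite mulr_sumr; apply: eq_bigr => l _.
by rewrite leq_addl addnK mulrCA.
Qed.
End RealF.

Lemma mu1 : mu 1 = 1%R.
Proof. by rewrite /mu. Qed.

Lemma mu_lb (x m : nat) : (- (x%:Z) <= x%:Z * mu m)%R.
Proof.
rewrite /mu; case: ifP => _; last by rewrite mulr0 oppr_le0.
rewrite -signr_odd; case: (odd _) => /=.
  by rewrite expr1 mulrN1.
rewrite expr0 mulr1; lia.
Qed.

Lemma Posz_sum (s : seq nat) (P : pred nat) (f : nat -> nat) :
  ((\sum_(i <- s | P i) f i)%N%:Z = \sum_(i <- s | P i) (f i)%:Z)%R.
Proof. by apply: (big_morph Posz PoszD). Qed.

Lemma rsum_lb k n : (0 < n)%N ->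
  ((k ^ n)%:Z - (\sum_(d <- divisors n | d != n) k ^ d)%N%:Z <= rsum k n)%R.
Proof.
move=> hn.
rewrite /rsum (bigD1_seq n) ?divisors_id ?divisors_uniq //= divnn hn mu1 mulr1.
rewrite lerD2l Posz_sum -sumrN; apply: ler_sum => d _; exact: mu_lb.
Qed.

Lemma div_sum_le k n : (0 < n)%N ->
  (\sum_(d <- divisors n | d != n) k ^ d <= \sum_(0 <= d < n./2.+1) k ^ d)%N.
Proof.
move=> hn.
have pe : perm_eq (divisors n) [seq d <- iota 0 n.+1 | d %| n].
  apply: uniq_perm; first exact: divisors_uniq.
    by rewrite filter_uniq // iota_uniq.
  move=> d; rewrite mem_filter mem_iota /= add0n -dvdn_divisors //.
  case hd: (d %| n) => //=; symmetry; rewrite ltnS; exact: dvdn_leq.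
rewrite (perm_big _ pe) big_filter_cond.
apply: (@leq_trans (\sum_(d <- iota 0 n.+1 | d <= n./2) k ^ d)).
  rewrite [X in (_ <= X)%N]big_mkcond [X in (X <= _)%N]big_mkcond /=.
  apply: leq_sum => d _.
  case hd: (d %| n) => //=; case hdn: (d != n) => //=.
  have -> : (d <= n./2)%N => //.
  move/dvdnP: hd => [q hq]; rewrite geq_half_double -addnn.
  have hq0 : q != 0%N by apply/eqP => q0; move: hn; rewrite hq q0.
  have hq1 : q != 1%N by apply/eqP => q1; move/eqP: hdn; rewrite hq q1 mul1n.
  rewrite hq; nia.
have hle : (n./2.+1 <= n.+1)%N by rewrite ltnS -divn2 leq_div.
rewrite (big_nat_widen 0 n./2.+1 n.+1) //.
Qed.

Lemma geom_le k h : (2 <= k)%N -> (\sum_(0 <= d < h.+1) k ^ d <= 2 * k ^ h)%N.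
Proof.
move=> hk; elim: h => [|h IH]; first by rewrite big_nat1.
rewrite big_nat_recr //= expnS.
have : (2 * k ^ h <= k * k ^ h)%N by rewrite leq_mul2r hk orbT.
lia.
Qed.

Lemma pow2_sq h : (4 <= h)%N -> (h * h <= 2 ^ h)%N.
Proof.
elim: h => // h IH hh.
case: (eqVneq h 3) => [-> //|h3].
have h4 : (4 <= h)%N by move/eqP: h3; lia.
have := IH h4; rewrite expnS; nia.
Qed.

Lemma r_lb k j n : (2 <= k)%N -> (4 * j + 12 <= n)%N -> (j.+1 <= r_ k n)%N.
Proof.
move=> hk hn.
have n0 : (0 < n)%N by lia.
set h := n./2.
have hh : (2 * j + 6 <= h)%N by rewrite /h geq_half_double -muln2; lia.
have hn2 : (n <= 2 * h + 1)%N.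
  by have := odd_double_half n; rewrite -/h -muln2; case: (odd n) => /=; lia.
have hS := leq_trans (div_sum_le k n0) (geom_le h hk).
have k1 : (k ^ h * k ^ h <= k ^ n)%N.
  rewrite -expnD leq_pexp2l //; [lia|lia].
have k2 : (2 ^ h <= k ^ h)%N by rewrite leq_exp2r //; lia.
have k3 := pow2_sq (_ : (4 <= h)%N).
have k4 : ((j.+1) * n + 2 * k ^ h <= k ^ n)%N.
  have H4 : (4 <= h)%N by lia.
  have := k3 H4.
  set X := (k ^ h)%N; set Y := (k ^ n)%N.
  move=> hX; nia.
have hr := rsum_lb k n0.
set S := (\sum_(d <- divisors n | d != n) k ^ d)%N in hS hr.
have hr2 : ((j.+1 * n)%:Z <= rsum k n)%R.
  apply: le_trans hr; lia.
rewrite /r_.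
case E: (rsum k n) => [R|R]; rewrite E in hr2; last by lia.
rewrite divz_nat absz_nat.
have : (j.+1 * n %/ n <= R %/ n)%N by apply: leq_div2r; lia.
by rewrite mulnK.
Qed.

Section Bridge.
Local Open Scope R_scope.
Lemma omega_std n r j : (0 < n)%N -> (j <= r)%N ->
  omega n r j = / (INR (fact j) * INR n ^ j) * sum_f_R0 (tg_alt (Un (/ INR n))) (r - j).
Proof.
case: n => // n' _ hjr.
rewrite omegaE hjr !RealsE.
congr (_ * _); apply: eq_bigr => l _.
rewrite /tg_alt /Un IZR_NEG !RealsE.
by [].
Qed.

Lemma omega_gt n r j : (0 < n)%N -> (r < j)%N -> omega n r j = 0.
Proof.
case: n => // n' _ h.
by rewrite omegaE leqNgt h.
Qed.
End Bridge.

Open Scope R_scope.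

Theorem mainTheorem5 (k j : nat) (hk : (2 <= k)%coq_nat) :
  (exists C : R, exists N : nat, forall n : nat, (N <= n)%coq_nat ->
     Rabs (komega k n j - exp (- / INR n) / (INR (fact j) * INR n ^ j))
       <= C * (2 ^ (r_ k n - j)%coq_nat / INR (fact (r_ k n - j)%coq_nat)))
  /\
  (exists C : R, exists N : nat, forall n : nat, (N <= n)%coq_nat ->
     Rabs (komega k n j - / (INR (fact j) * INR n ^ j) * (1 - / INR n))
       <= C * / INR n ^ (j + 2)%coq_nat).
Proof.
have Esub : forall a b : nat, Nat.sub a b = (a - b)%N by [].
have Eadd : forall a b : nat, Nat.add a b = (a + b)%N by [].
move/ssrnat.leP: hk => hk.
split.
- exists 1, 1%nat => n /ssrnat.leP hn; rewrite /komega Esub.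
  case: (leqP j (r_ k n)) => hjr.
  + by rewrite omega_std //; apply: part1_bound.
  + rewrite omega_gt // (_ : (r_ k n - j = 0)%N); last by apply/eqP; rewrite subn_eq0 ltnW.
    exact: part1_zero.
- exists 1, (4 * j + 12)%nat => n /ssrnat.leP hn.
  have hr := r_lb hk hn.
  rewrite /komega omega_std; [|lia|lia].
  rewrite Eadd.
  apply: part2_bound; lia.
Qed.
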